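(* Let $\gamma:S^n\to\mathbb{R}_+$ be continuous. Then $\mathcal W_\gamma$ is a self-dual Wulff shape if and only if the spherical convex body $\alpha_N^{-1}\circ Id(\mathcal W_\gamma)\subset S^{n+1}$ is of constant diameter $\pi/2$.
   Context: Wulff shapes. For continuous $\gamma:S^n\to\mathbb{R}_+$, the Wulff shape is $\mathcal W_\gamma=\bigcap_{\theta\in S^n}\{x\in\mathbb{R}^{n+1}:x\cdot\theta\le\gamma(\theta)\}$. Its radial function is $\rho(\theta)=\max\{\lambda>0:\lambda\theta\in\mathcal W_\gamma\}$. Dual and self-dual Wulff shapes. With $\bar\gamma(\theta)=1/\rho(-\theta)$, the dual Wulff shape is $\mathcal{DW}_\gamma=\mathcal W_{\bar\gamma}$; equivalently $\mathcal{DW}_\gamma=-(\mathcal W_\gamma)^\circ$, where $K^\circ=\{x:x\cdot y\le1\ \forall y\in K\}$ is the Euclidean polar. $\mathcal W_\gamma$ is self-dual if $\mathcal W_\gamma=\mathcal{DW}_\gamma$. The maps. $Id(x)=(x,1)$. With $N=(0,\dots,0,1)$ and $S^{n+1}_{N,+}=\{Q\in S^{n+1}:Q_{n+2}>0\}$, the central projection $\alpha_N:S^{n+1}_{N,+}\to\mathbb{R}^{n+1}\times\{1\}$ is $\alpha_N(P_1,\dots,P_{n+2})=(P_1/P_{n+2},\dots,P_{n+1}/P_{n+2},1)$. Constant diameter. The spherical distance on $S^{n+1}$ is $|PQ|=\arccos(P\cdot Q)$. The diameter of $K$ is $\max\{|PQ|:P,Q\in K\}$. A spherical convex body $K$ is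 of constant diameter $\tau$ if its diameter is $\tau$ and, for every boundary point $P$ of $K$ (boundary relative to $S^{n+1}$), there is $Q\in K$ with $|PQ|=\tau$. *)

(* Defs.v *)
From Stdlib Require Import Reals.
Open Scope R_scope.

(* Points of R^(m+1) are represented as functions nat -> R; only the
   coordinates 0..m are relevant (all definitions below only read them). *)
Definition vec := nat -> R.

Definition dot (m : nat) (x y : vec) : R := sum_f_R0 (fun i => x i * y i) m.

Definition edist (m : nat) (x y : vec) : R :=
  sqrt (sum_f_R0 (fun i => (x i - y i) * (x i - y i)) m).

Definition sphere (m : nat) (x : vec) : Prop := dot m x x = 1.

Definition continuous_on_sphere (n : nat) (gamma : vec -> R) : Prop :=
  forall th, sphere n th -> forall eps, eps > 0 ->
    exists delta, delta > 0 /\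
      forall th', sphere n th' -> edist n th th' < delta ->
        Rabs (gamma th - gamma th') < eps.

Definition positive_on_sphere (n : nat) (gamma : vec -> R) : Prop :=
  forall th, sphere n th -> gamma th > 0.

Definition Wulff (n : nat) (gamma : vec -> R) (x : vec) : Prop :=
  forall th, sphere n th -> dot n x th <= gamma th.

Definition scale (l : R) (x : vec) : vec := fun i => l * x i.
Definition vopp (x : vec) : vec := fun i => - x i.

Definition is_radial (n : nat) (gamma : vec -> R) (th : vec) (r : R) : Prop :=
  r > 0 /\ Wulff n gamma (scale r th) /\
  forall l, l > 0 -> Wulff n gamma (scale l th) -> l <= r.

(* Dual Wulff shape DW_gamma = W_{gamma_bar}, gamma_bar(th) = 1 / rho(-th). *)
Definition DualWulff (n : nat) (gamma : vec -> R) (x : vec) : Prop :=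
  forall th, sphere n th ->
    forall r, is_radial n gamma (vopp th) r -> dot n x th <= / r.

Definition self_dual (n : nat) (gamma : vec -> R) : Prop :=
  forall x, Wulff n gamma x <-> DualWulff n gamma x.

(* alpha_N : S^{n+1}_{N,+} -> R^{n+1} x {1}, P |-> (P_i / P_{n+2})_i.
   Coordinate n+1 (0-based) is the last coordinate of R^{n+2}. *)
Definition alphaN (n : nat) (P : vec) : vec := fun i => P i / P (S n).

Definition IdMap (n : nat) (x : vec) : vec :=
  fun i => if Nat.leb i n then x i else 1.

Definition image_Id (n : nat) (A : vec -> Prop) (y : vec) : Prop :=
  exists x, A x /\ forall i, (i <= S n)%nat -> y i = IdMap n x i.

Definition alphaN_inv (n : nat) (Sset : vec -> Prop) (P : vec) : Prop :=
  sphere (S n) P /\ P (S n) > 0 /\ Sset (alphaN n P).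

Definition sdist (m : nat) (P Q : vec) : R := acos (dot m P Q).

Definition sph_boundary (m : nat) (K : vec -> Prop) (P : vec) : Prop :=
  sphere m P /\
  forall eps, eps > 0 ->
    (exists Q, sphere m Q /\ K Q /\ edist m P Q < eps) /\
    (exists Q, sphere m Q /\ ~ K Q /\ edist m P Q < eps).

Definition diameter_is (m : nat) (K : vec -> Prop) (tau : R) : Prop :=
  (exists P Q, K P /\ K Q /\ sdist m P Q = tau) /\
  (forall P Q, K P -> K Q -> sdist m P Q <= tau).

Definition constant_diameter (m : nat) (K : vec -> Prop) (tau : R) : Prop :=
  diameter_is m K tau /\
  forall P, sph_boundary m K P -> exists Q, K Q /\ sdist m P Q = tau.

(* Main.v *)
Require Import Defs.
From Stdlib Require Import Reals Lra Lia Psatz Classical ClassicalEpsilon.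
From Coquelicot Require Compactness.
Open Scope R_scope.

Lemma dot_sym m x y : dot m x y = dot m y x.
Proof. unfold dot; apply sum_eq; intros; ring. Qed.

Lemma dot_ext_l m x x' y : (forall i, (i <= m)%nat -> x i = x' i) -> dot m x y = dot m x' y.
Proof. intros H; unfold dot; apply sum_eq; intros i Hi; rewrite H; auto. Qed.

Lemma dot_ext_r m x y y' : (forall i, (i <= m)%nat -> y i = y' i) -> dot m x y = dot m x y'.
Proof. intros H; unfold dot; apply sum_eq; intros i Hi; rewrite H; auto. Qed.

Lemma dot_scale_l m l x y : dot m (scale l x) y = l * dot m x y.
Proof. unfold dot, scale; rewrite scal_sum; apply sum_eq; intros; ring. Qed.

Lemma dot_scale_r m l x y : dot m x (scale l y) = l * dot m x y.
Proof. rewrite dot_sym, dot_scale_l, dot_sym; auto. Qed.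

Lemma dot_sub_l m x y z : dot m (fun i => x i - y i) z = dot m x z - dot m y z.
Proof. unfold dot; rewrite <- minus_sum; apply sum_eq; intros; ring. Qed.

Lemma dot_sub_r m x y z : dot m z (fun i => x i - y i) = dot m z x - dot m z y.
Proof. rewrite dot_sym, dot_sub_l, (dot_sym m x), (dot_sym m y); auto. Qed.

Lemma dot_S n x y : dot (S n) x y = dot n x y + x (S n) * y (S n).
Proof. reflexivity. Qed.

Lemma dot_nonneg m x : 0 <= dot m x x.
Proof. unfold dot; apply cond_pos_sum; intros; nra. Qed.

Lemma dot_coord m x i : (i <= m)%nat -> x i * x i <= dot m x x.
Proof.
  induction m; intros Hi.
  - assert (i = 0%nat) by lia; subst; unfold dot; simpl; lra.
  - rewrite dot_S. destruct (Nat.eq_dec i (S m)).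
    + subst. pose proof (dot_nonneg m x); lra.
    + assert (i <= m)%nat by lia. specialize (IHm H). nra.
Qed.

Lemma dot_zero m x : dot m x x = 0 -> forall i, (i <= m)%nat -> x i = 0.
Proof. intros H i Hi; pose proof (dot_coord m x i Hi); nra. Qed.

Lemma dot_expand m x y k :
  dot m (fun i => x i - k * y i) (fun i => x i - k * y i)
  = dot m x x - 2 * k * dot m x y + k * k * dot m y y.
Proof.
  unfold dot.
  replace (sum_f_R0 (fun i => (x i - k * y i) * (x i - k * y i)) m) with
    (sum_f_R0 (fun i => x i * x i - (2*k) * (x i * y i) + (k*k) * (y i * y i)) m)
    by (apply sum_eq; intros; ring).
  rewrite sum_plus, minus_sum.
  rewrite (scal_sum (fun i => x i * y i) m (2*k)), (scal_sum (fun i => y i * y i) m (k*k)).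
  f_equal; [f_equal|]; apply sum_eq; intros; ring.
Qed.

Lemma CS m x y : dot m x y * dot m x y <= dot m x x * dot m y y.
Proof.
  destruct (Req_dec (dot m y y) 0) as [H0|H0].
  - assert (dot m x y = 0).
    { unfold dot. rewrite <- (sum_eq (fun _ => 0)).
      - clear. induction m; simpl; lra.
      - intros i Hi; rewrite (dot_zero m y H0 i Hi); ring. }
    rewrite H, H0; lra.
  - pose proof (dot_nonneg m y).
    pose proof (dot_nonneg m (fun i => x i - (dot m x y / dot m y y) * y i)) as H1.
    rewrite dot_expand in H1.
    set (a := dot m x x) in *; set (b := dot m y y) in *; set (c := dot m x y) in *.
    assert (0 < b) by lra.
    replace (a - 2 * (c / b) * c + c / b * (c / b) * b) with (a - c*c/b) in H1
      by (field; lra).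
    assert (c * c / b <= a) by lra.
    apply (Rmult_le_reg_r (/ b)). apply Rinv_0_lt_compat; lra.
    replace (a * b * / b) with a by (field; lra). unfold Rdiv in H2. lra.
Qed.

Lemma CS_abs m x y : Rabs (dot m x y) <= sqrt (dot m x x) * sqrt (dot m y y).
Proof.
  rewrite <- sqrt_mult by apply dot_nonneg.
  rewrite <- sqrt_Rsqr_abs. apply sqrt_le_1_alt. unfold Rsqr. apply CS.
Qed.

Lemma CS_unit m x y : sphere m x -> sphere m y -> Rabs (dot m x y) <= 1.
Proof.
  unfold sphere; intros Hx Hy. pose proof (CS_abs m x y). rewrite Hx, Hy, sqrt_1 in H. lra.
Qed.

Lemma edist_eq m x y : edist m x y = sqrt (dot m (fun i => x i - y i) (fun i => x i - y i)).
Proof. reflexivity. Qed.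

Lemma edist_coord m x y i : (i <= m)%nat -> Rabs (x i - y i) <= edist m x y.
Proof.
  intros Hi. rewrite edist_eq. rewrite <- sqrt_Rsqr_abs. apply sqrt_le_1_alt.
  unfold Rsqr. apply (dot_coord m (fun i => x i - y i) i Hi).
Qed.

Lemma edist_S n x y : edist n x y <= edist (S n) x y.
Proof.
  rewrite !edist_eq. apply sqrt_le_1_alt. rewrite dot_S.
  match goal with |- ?a <= ?a + ?b * ?b => pose proof (Rle_0_sqr b); unfold Rsqr in *; lra end.
Qed.

Lemma edist_self m x : edist m x x = 0.
Proof.
  rewrite edist_eq. assert (dot m (fun i => x i - x i) (fun i => x i - x i) = 0).
  { unfold dot. rewrite (sum_eq _ (fun _ => 0)). clear; induction m; simpl; lra.
    intros; ring. }
  rewrite H. apply sqrt_0.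
Qed.

Lemma dot_lip m a x y : Rabs (dot m a x - dot m a y) <= sqrt (dot m a a) * edist m x y.
Proof. rewrite <- dot_sub_r, edist_eq. apply CS_abs. Qed.

Lemma dot_lip_unit m a x y : dot m a a <= 1 -> Rabs (dot m a x - dot m a y) <= edist m x y.
Proof.
  intros H. pose proof (dot_lip m a x y).
  assert (sqrt (dot m a a) <= 1) by (rewrite <- sqrt_1; apply sqrt_le_1_alt; auto).
  assert (0 <= edist m x y) by apply sqrt_pos.
  nra.
Qed.

Fixpoint to_T (k : nat) (f : vec) : Compactness.Tn k R :=
  match k with
  | O => tt
  | S k' => (f O, to_T k' (fun i => f (S i)))
  end.

Fixpoint of_T (k : nat) : Compactness.Tn k R -> vec :=
  match k with
  | O => fun _ _ => 0
  | S k' => fun T i => match i with O => fst T | S j => of_T k' (snd T) j end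
  end.

Lemma close_conv k d f T : Compactness.close_n k d (to_T k f) T ->
  forall i, (i < k)%nat -> Rabs (f i - of_T k T i) < d.
Proof.
  revert f T; induction k; intros f T H i Hi; [lia|].
  destruct T as [t1 T2]. simpl in H. destruct H as [H1 H2].
  destruct i; simpl; auto.
  apply (IHk (fun i => f (S i)) T2 H2 i). lia.
Qed.

Lemma bounded_conv k f : (forall i, (i < k)%nat -> -1 <= f i <= 1) ->
  Compactness.bounded_n k (to_T k (fun _ => -1)) (to_T k (fun _ => 1)) (to_T k f).
Proof.
  revert f; induction k; intros f H; simpl; auto.
  split. apply H; lia. apply (IHk (fun i => f (S i))). intros; apply H; lia.
Qed.

Lemma sq_lt a d : Rabs a < d -> a * a < d * d.
Proof.
  intros H. assert (Rabs a * Rabs a = a * a) by (rewrite <- Rabs_mult; apply Rabs_right; nra).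
  pose proof (Rabs_pos a). nra.
Qed.

Lemma sum_small m v d : (forall i, (i <= m)%nat -> Rabs (v i) < d) ->
  dot m v v < INR (S m) * (d * d).
Proof.
  induction m; intros H.
  - unfold dot; simpl. specialize (H O (le_n _)). pose proof (sq_lt _ _ H). lra.
  - rewrite dot_S. rewrite S_INR.
    pose proof (sq_lt _ _ (H (S m) (le_n _))).
    assert (dot m v v < INR (S m) * (d*d)) by (apply IHm; intros; apply H; lia).
    lra.
Qed.

Lemma sum_dev m x t d : 0 <= d <= 1 -> (forall i, (i <= m)%nat -> Rabs (x i - t i) < d) ->
  Rabs (dot m x x - dot m t t) <= d * sum_f_R0 (fun i => 2 * Rabs (t i) + 1) m.
Proof.
  intros Hd; induction m; intros H.
  - unfold dot; simpl. specialize (H O (le_n _)).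
    replace (x O * x O - t O * t O) with ((x O - t O) * (x O - t O + 2 * t O)) by ring.
    rewrite Rabs_mult. pose proof (Rabs_pos (x O - t O)).
    pose proof (Rabs_triang (x O - t O) (2 * t O)). rewrite Rabs_mult, (Rabs_right 2) in H1 by lra.
    pose proof (Rabs_pos (x O - t O + 2 * t O)). nra.
  - rewrite !dot_S. simpl sum_f_R0.
    assert (IH : Rabs (dot m x x - dot m t t) <= d * sum_f_R0 (fun i => 2 * Rabs (t i) + 1) m)
      by (apply IHm; intros; apply H; lia).
    specialize (H (S m) (le_n _)).
    replace (dot m x x + x (S m) * x (S m) - (dot m t t + t (S m) * t (S m))) with
      ((dot m x x - dot m t t) + (x (S m) - t (S m)) * (x (S m) - t (S m) + 2 * t (S m))) by ring.
    eapply Rle_trans. apply Rabs_triang. rewrite Rabs_mult.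
    pose proof (Rabs_pos (x (S m) - t (S m))).
    pose proof (Rabs_triang (x (S m) - t (S m)) (2 * t (S m))). rewrite Rabs_mult, (Rabs_right 2) in H1 by lra.
    pose proof (Rabs_pos (x (S m) - t (S m) + 2 * t (S m))). nra.
Qed.

Lemma sum_pos1 m (t : vec) : 1 <= sum_f_R0 (fun i => 2 * Rabs (t i) + 1) m.
Proof.
  induction m; simpl; pose proof (Rabs_pos (t O)); try pose proof (Rabs_pos (t (S m))); lra.
Qed.

Lemma local_strong n (g : vec -> R) :
  (forall th, sphere n th -> exists d, d > 0 /\ exists M, forall th', sphere n th' ->
      edist n th th' < d -> g th' <= M) ->
  forall t, exists p : R * R, fst p > 0 /\ forall x, sphere n x ->
      (forall i, (i <= n)%nat -> Rabs (x i - t i) < fst p) -> g x <= snd p.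
Proof.
  intros Hl t. destruct (classic (sphere n t)) as [Ht|Ht].
  - destruct (Hl t Ht) as [d [Hd [M HM]]].
    exists (d / INR (S n), M). cbn [fst snd]. pose proof (lt_0_INR (S n) (Nat.lt_0_succ n)).
    split. apply Rdiv_lt_0_compat; lra.
    intros x Hx Hc. apply HM; auto.
    assert (dot n (fun i => t i - x i) (fun i => t i - x i) < INR (S n) * ((d / INR (S n)) * (d / INR (S n)))).
    { apply sum_small. intros i Hi. rewrite Rabs_minus_sym. apply Hc; auto. }
    rewrite edist_eq. 
    assert (INR (S n) * (d / INR (S n) * (d / INR (S n))) <= d * d).
    { replace (INR (S n) * (d / INR (S n) * (d / INR (S n)))) with (d * d / INR (S n)) by (field; lra).
      assert (1 <= INR (S n)) by (apply (le_INR 1); lia).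
      apply Rmult_le_reg_r with (INR (S n)); [lra|].
      replace (d * d / INR (S n) * INR (S n)) with (d*d) by (field; lra). nra. }
    rewrite <- (sqrt_square d) by lra. apply sqrt_lt_1_alt. split. apply dot_nonneg. lra.
  - set (e := Rabs (dot n t t - 1)).
    assert (He : e > 0) by (apply Rabs_pos_lt; unfold sphere in Ht; lra).
    set (C := sum_f_R0 (fun i => 2 * Rabs (t i) + 1) n).
    assert (HC : 1 <= C) by apply sum_pos1.
    exists (Rmin 1 (e / (2 * C)), 0). cbn [fst snd].
    assert (0 < e / (2 * C)) by (apply Rdiv_lt_0_compat; lra).
    split. apply Rmin_pos; lra.
    intros x Hx Hc. exfalso.
    pose proof (Rmin_l 1 (e / (2 * C))). pose proof (Rmin_r 1 (e / (2 * C))).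
    assert (0 <= Rmin 1 (e / (2 * C))) by (apply Rlt_le, Rmin_pos; lra).
    pose proof (sum_dev n x t (Rmin 1 (e / (2 * C))) ltac:(lra) Hc) as Hd.
    fold C in Hd. unfold sphere in Hx. rewrite Hx in Hd.
    rewrite Rabs_minus_sym in Hd. fold e in Hd.
    assert (Rmin 1 (e / (2 * C)) * C <= e / (2*C) * C) by (apply Rmult_le_compat_r; lra).
    replace (e / (2 * C) * C) with (e/2) in H3 by (field; lra). lra.
Qed.

Lemma fold_max_ge {A} (h : A -> R) (l : list A) a :
  List.In a l -> h a <= List.fold_right (fun T acc => Rmax (h T) acc) 0 l.
Proof.
  induction l; simpl; [tauto|]. intros [<-|Hi].
  - apply Rmax_l.
  - eapply Rle_trans; [apply IHl; auto| apply Rmax_r].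
Qed.

Lemma local_global n (g : vec -> R) :
  (forall th, sphere n th -> exists d, d > 0 /\ exists M, forall th', sphere n th' ->
      edist n th th' < d -> g th' <= M) ->
  exists M, forall th, sphere n th -> g th <= M.
Proof.
  intros Hl. pose proof (local_strong n g Hl) as Hs.
  set (f := fun t => proj1_sig (constructive_indefinite_description _ (Hs t))).
  assert (Hf : forall t, fst (f t) > 0 /\ forall x, sphere n x ->
      (forall i, (i <= n)%nat -> Rabs (x i - t i) < fst (f t)) -> g x <= snd (f t)).
  { intros t. unfold f. destruct (constructive_indefinite_description _ (Hs t)); simpl; auto. }
  set (delta := fun T => mkposreal (fst (f (of_T (S n) T))) (proj1 (Hf (of_T (S n) T)))).
  pose proof (Compactness.compactness_list (S n) (to_T (S n) (fun _ => -1)) (to_T (S n) (fun _ => 1)) delta) as Hc.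
  apply NNPP. intros Hno. apply Hc. intros [l Hl2]. apply Hno.
  exists (List.fold_right (fun T acc => Rmax (snd (f (of_T (S n) T))) acc) 0 l).
  intros x Hx.
  destruct (Hl2 (to_T (S n) x)) as [T [HT1 [HT2 HT3]]].
  { apply bounded_conv. intros i Hi.
    pose proof (dot_coord n x i ltac:(lia)). unfold sphere in Hx. rewrite Hx in H. nra. }
  eapply Rle_trans; [| apply (fold_max_ge (fun T => snd (f (of_T (S n) T))) l T HT1)].
  simpl. apply (proj2 (Hf (of_T (S n) T))); auto.
  intros i Hi. apply (close_conv (S n) (delta T) x T HT3 i). lia.
Qed.

Lemma cont_upper n g : continuous_on_sphere n g -> exists M, forall th, sphere n th -> g th <= M.
Proof.
  intros Hc. apply local_global. intros th Hth.
  destruct (Hc th Hth 1 ltac:(lra)) as [d [Hd Hd2]].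
  exists d; split; auto. exists (g th + 1). intros th' H1 H2.
  specialize (Hd2 th' H1 H2). apply Rabs_def2 in Hd2. lra.
Qed.

Lemma cont_lower n g : continuous_on_sphere n g -> positive_on_sphere n g ->
  exists c, c > 0 /\ forall th, sphere n th -> g th >= c.
Proof.
  intros Hc Hp.
  destruct (local_global n (fun th => / g th)) as [M HM].
  { intros th Hth. pose proof (Hp th Hth).
    destruct (Hc th Hth (g th / 2) ltac:(lra)) as [d [Hd Hd2]].
    exists d; split; auto. exists (2 / g th). intros th' H1 H2.
    specialize (Hd2 th' H1 H2). apply Rabs_def2 in Hd2.
    assert (g th' > g th / 2) by lra.
    apply Rle_trans with (/ (g th / 2)).
    apply Rlt_le, Rinv_lt_contravar; [apply Rmult_lt_0_compat|]; lra.
    right; field; lra. }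
  exists (/ Rmax M 1). pose proof (Rmax_r M 1). split.
  apply Rlt_gt, Rinv_0_lt_compat; lra.
  intros th Hth. pose proof (Hp th Hth). specialize (HM th Hth).
  pose proof (Rmax_l M 1).
  apply Rle_ge. 
  replace (g th) with (/ / g th) by (field; lra).
  apply Rinv_le_contravar. apply Rinv_0_lt_compat; lra. lra.
Qed.

Lemma wulff_ext n g x x' : (forall i, (i <= n)%nat -> x i = x' i) -> Wulff n g x -> Wulff n g x'.
Proof. intros He Hw th Hth. rewrite <- (dot_ext_l n x x'); auto. Qed.

Lemma K_iff n g P : alphaN_inv n (image_Id n (Wulff n g)) P <->
  sphere (S n) P /\ P (S n) > 0 /\ Wulff n g (alphaN n P).
Proof.
  split.
  - intros [H1 [H2 [x [Hx He]]]]. repeat split; auto.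
    apply (wulff_ext n g x); auto. intros i Hi. rewrite He by lia.
    unfold IdMap. rewrite (proj2 (Nat.leb_le i n) Hi). auto.
  - intros [H1 [H2 H3]]. repeat split; auto. exists (alphaN n P); split; auto.
    intros i Hi. unfold IdMap. destruct (Nat.leb i n) eqn:E; auto.
    apply Nat.leb_gt in E. assert (i = S n) by lia. subst.
    unfold alphaN. field. lra.
Qed.

Definition sN n z := sqrt (1 + dot n z z).
Definition Nz n z : vec := fun i => IdMap n z i / sN n z.

Lemma sN_pos n z : sN n z > 0.
Proof. unfold sN. apply sqrt_lt_R0. pose proof (dot_nonneg n z). lra. Qed.

Lemma sN_sq n z : sN n z * sN n z = 1 + dot n z z.
Proof. unfold sN. apply sqrt_sqrt. pose proof (dot_nonneg n z). lra. Qed.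

Lemma Nz_low n z i : (i <= n)%nat -> Nz n z i = z i / sN n z.
Proof. intros Hi. unfold Nz, IdMap. rewrite (proj2 (Nat.leb_le i n) Hi). auto. Qed.

Lemma Nz_last n z : Nz n z (S n) = 1 / sN n z.
Proof. unfold Nz, IdMap. rewrite (proj2 (Nat.leb_gt (S n) n) (Nat.lt_succ_diag_r n)). auto. Qed.

Lemma dot_Nz_l n z w : dot n (Nz n z) w = dot n z w / sN n z.
Proof.
  rewrite (dot_ext_l n (Nz n z) (scale (/ sN n z) z)).
  rewrite dot_scale_l. unfold Rdiv; ring.
  intros i Hi. rewrite Nz_low; auto. unfold scale, Rdiv; ring.
Qed.

Lemma dot_Nz n a b : dot (S n) (Nz n a) (Nz n b) = (dot n a b + 1) / (sN n a * sN n b).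
Proof.
  rewrite dot_S, Nz_last, Nz_last, dot_Nz_l, dot_sym, dot_Nz_l, dot_sym.
  pose proof (sN_pos n a); pose proof (sN_pos n b). field; lra.
Qed.

Lemma Nz_sphere n z : sphere (S n) (Nz n z).
Proof.
  unfold sphere. rewrite dot_Nz, sN_sq. pose proof (dot_nonneg n z). field. lra.
Qed.

Lemma Nz_last_pos n z : Nz n z (S n) > 0.
Proof. rewrite Nz_last. pose proof (sN_pos n z). apply Rlt_gt, Rdiv_lt_0_compat; lra. Qed.

Lemma alphaN_Nz n z i : (i <= n)%nat -> alphaN n (Nz n z) i = z i.
Proof.
  intros Hi. unfold alphaN. rewrite Nz_low, Nz_last; auto. pose proof (sN_pos n z). field. lra.
Qed.

Lemma K_Nz n g z : alphaN_inv n (image_Id n (Wulff n g)) (Nz n z) <-> Wulff n g z.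
Proof.
  rewrite K_iff. split.
  - intros [_ [_ H]]. apply (wulff_ext n g (alphaN n (Nz n z))); auto.
    intros; apply alphaN_Nz; auto.
  - intros H. split. apply Nz_sphere. split. apply Nz_last_pos.
    apply (wulff_ext n g z); auto. intros; symmetry; apply alphaN_Nz; auto.
Qed.

Lemma P_scaled n P i : P (S n) <> 0 -> P i = P (S n) * alphaN n P i.
Proof. intros H. unfold alphaN. field. auto. Qed.

Lemma dot_K n P Q : P (S n) <> 0 -> Q (S n) <> 0 ->
  dot (S n) P Q = P (S n) * Q (S n) * (dot n (alphaN n P) (alphaN n Q) + 1).
Proof.
  intros HP HQ. rewrite dot_S.
  rewrite (dot_ext_l n P (scale (P (S n)) (alphaN n P))) by (intros; unfold scale; apply P_scaled; auto).
  rewrite (dot_ext_r n _ Q (scale (Q (S n)) (alphaN n Q))) by (intros; unfold scale; apply P_scaled; auto).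
  rewrite dot_scale_l, dot_scale_r. ring.
Qed.

Lemma dot_alphaN n P th : dot n (alphaN n P) th = dot n P th / P (S n).
Proof.
  rewrite (dot_ext_l n (alphaN n P) (scale (/ P (S n)) P)).
  rewrite dot_scale_l. unfold Rdiv; ring.
  intros; unfold alphaN, scale, Rdiv; ring.
Qed.

Lemma acos_le_half v : 0 <= v -> acos v <= PI / 2.
Proof.
  intros Hv. destruct (Rle_dec 1 v).
  - unfold acos. destruct (Rle_dec v (-1)); [lra|]. destruct (Rle_dec 1 v); [|lra].
    pose proof PI_RGT_0; lra.
  - destruct (Rle_dec (acos v) (PI/2)); auto. exfalso.
    pose proof (acos_bound v). pose proof (cos_acos v ltac:(lra)).
    assert (cos (acos v) < 0) by (apply cos_lt_0; pose proof PI_RGT_0; lra). lra.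
Qed.

Lemma acos_le_half_inv v : acos v <= PI / 2 -> 0 <= v.
Proof.
  intros H. destruct (Rle_dec v (-1)).
  - unfold acos in H. destruct (Rle_dec v (-1)); [|lra]. pose proof PI_RGT_0; lra.
  - destruct (Rle_dec 1 v); [lra|].
    pose proof (acos_bound v). pose proof (cos_acos v ltac:(lra)).
    rewrite <- H1. apply cos_ge_0; pose proof PI_RGT_0; lra.
Qed.

Lemma acos_half_inv v : acos v = PI / 2 -> v = 0.
Proof.
  intros H. pose proof PI_RGT_0. destruct (Rle_dec v (-1)).
  - unfold acos in H. destruct (Rle_dec v (-1)); [|lra]. lra.
  - destruct (Rle_dec 1 v).
    + unfold acos in H. destruct (Rle_dec v (-1)); [lra|]. destruct (Rle_dec 1 v); [|lra]. lra.
    + rewrite <- (cos_acos v) by lra. rewrite H. apply cos_PI2.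
Qed.

Lemma radial_exists n g c : c > 0 -> (forall th, sphere n th -> g th >= c) ->
  forall u, sphere n u -> exists r, is_radial n g u r.
Proof.
  intros Hc Hlow u Hu.
  set (E := fun l => l > 0 /\ Wulff n g (scale l u)).
  assert (HE : forall l, E l -> l <= g u).
  { intros l [Hl Hw]. specialize (Hw u Hu). rewrite dot_scale_l in Hw.
    unfold sphere in Hu. rewrite Hu in Hw. lra. }
  assert (Ec : E c).
  { split; auto. intros ph Hph. rewrite dot_scale_l. pose proof (CS_unit n u ph Hu Hph).
    pose proof (Rle_abs (dot n u ph)). specialize (Hlow ph Hph). nra. }
  destruct (completeness E) as [r [Hr1 Hr2]].
  { exists (g u). intros l Hl. apply HE; auto. }
  { exists c; auto. }
  assert (Hrc : c <= r) by (apply Hr1; auto).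
  exists r. split; [lra|]. split.
  - intros ph Hph. rewrite dot_scale_l. set (k := dot n u ph).
    pose proof (Hlow ph Hph).
    destruct (Rle_dec k 0). nra.
    assert (r <= g ph / k).
    { apply Hr2. intros l [Hl Hw]. specialize (Hw ph Hph). rewrite dot_scale_l in Hw.
      fold k in Hw. apply Rmult_le_reg_r with k; [lra|].
      replace (g ph / k * k) with (g ph) by (field; lra). lra. }
    apply Rmult_le_compat_r with (r := k) in H0; [|lra].
    replace (g ph / k * k) with (g ph) in H0 by (field; lra). lra.
  - intros l Hl Hw. apply Hr1. split; auto.
Qed.

Definition nrm n y := sqrt (dot n y y).

Lemma radial_ge n g y u r : Wulff n g y -> 0 < dot n y y -> sphere n u ->
  (forall i, (i <= n)%nat -> u i = y i / nrm n y) -> is_radial n g u r -> nrm n y <= r.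
Proof.
  intros Hy Hyy Hu Hui [Hr1 [Hr2 Hr3]].
  assert (0 < nrm n y) by (apply sqrt_lt_R0; auto).
  apply Hr3; [lra|]. apply (wulff_ext n g y); auto.
  intros i Hi. unfold scale. rewrite Hui by auto. field. lra.
Qed.

Lemma DW_bound n g c : c > 0 -> (forall th, sphere n th -> g th >= c) ->
  forall x y, DualWulff n g x -> Wulff n g y -> dot n x y >= -1.
Proof.
  intros Hc Hlow x y Hx Hy.
  destruct (Req_dec (dot n y y) 0) as [H0|H0].
  - assert (dot n x y = 0).
    { unfold dot. rewrite (sum_eq _ (fun _ => 0)).
      - clear. induction n; simpl; lra.
      - intros i Hi. rewrite (dot_zero n y H0 i Hi). ring. }
    lra.
  - pose proof (dot_nonneg n y).
    assert (Hyy : 0 < dot n y y) by lra.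
    set (ny := nrm n y).
    assert (Hny : 0 < ny) by (apply sqrt_lt_R0; auto).
    assert (Hny2 : ny * ny = dot n y y) by (apply sqrt_sqrt; lra).
    set (th := scale (- / ny) y).
    assert (Hth : sphere n th).
    { unfold sphere, th. rewrite dot_scale_l, dot_scale_r. rewrite <- Hny2. field. lra. }
    assert (Hvth : sphere n (vopp th)).
    { unfold sphere in *. rewrite <- Hth. unfold dot, vopp. apply sum_eq; intros; ring. }
    destruct (radial_exists n g c Hc Hlow (vopp th) Hvth) as [r Hr].
    pose proof (Hx th Hth r Hr) as H1.
    assert (Hge : ny <= r).
    { apply (radial_ge n g y (vopp th) r); auto.
      intros i Hi. unfold vopp, th, scale. fold ny. field. lra. }
    unfold th in H1. rewrite dot_scale_r in H1.
    destruct Hr as [Hr0 _].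
    assert (/ r <= / ny) by (apply Rinv_le_contravar; lra).
    assert (- / ny * dot n x y <= / ny) by lra.
    apply Rmult_le_compat_l with (r := ny) in H3; [|lra].
    replace (ny * (- / ny * dot n x y)) with (- dot n x y) in H3 by (field; lra).
    replace (ny * / ny) with 1 in H3 by (field; lra). lra.
Qed.

Lemma dot_vopp_r n x y : dot n x (vopp y) = - dot n x y.
Proof.
  rewrite (dot_ext_r n x (vopp y) (scale (-1) y)) by (intros; unfold vopp, scale; ring).
  rewrite dot_scale_r; ring.
Qed.

Lemma W_in_DW n g : (forall x y, Wulff n g x -> Wulff n g y -> dot n x y >= -1) ->
  forall x, Wulff n g x -> DualWulff n g x.
Proof.
  intros H x Hx th Hth r [Hr0 [Hr1 _]].
  specialize (H x _ Hx Hr1). rewrite dot_scale_r in H.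
  replace (dot n x (vopp th)) with (- dot n x th) in H
    by (symmetry; apply dot_vopp_r).
  apply Rmult_le_reg_l with r; [lra|]. rewrite Rinv_r by lra. lra.
Qed.

Lemma facet_DW n g th0 : sphere n th0 -> g th0 > 0 -> DualWulff n g (scale (- / g th0) th0).
Proof.
  intros H0 Hg th Hth r [Hr0 [Hr1 _]].
  specialize (Hr1 th0 H0). rewrite dot_scale_l in Hr1. rewrite dot_scale_l.
  replace (dot n (vopp th) th0) with (- dot n th0 th) in Hr1
    by (rewrite (dot_sym n (vopp th)), dot_vopp_r; auto).
  set (k := dot n th0 th) in *.
  assert (- k <= g th0 / r).
  { apply Rmult_le_reg_l with r; [lra|]. replace (r * (g th0 / r)) with (g th0) by (field; lra). lra. }
  apply Rmult_le_reg_l with (g th0); [lra|].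
  replace (g th0 * (- / g th0 * k)) with (- k) by (field; lra).
  replace (g th0 * / r) with (g th0 / r) by (unfold Rdiv; ring). lra.
Qed.

Lemma edist_unit m U V : sphere m U -> sphere m V -> edist m U V = sqrt (2 - 2 * dot m U V).
Proof.
  intros HU HV. rewrite edist_eq. f_equal.
  rewrite dot_sub_l, !dot_sub_r. unfold sphere in *. rewrite (dot_sym m V U). lra.
Qed.

Lemma Nz_cont n x t eps : eps > 0 -> exists d, d > 0 /\ forall s, Rabs (s - t) < d ->
  edist (S n) (Nz n (scale t x)) (Nz n (scale s x)) < eps.
Proof.
  intros He. set (X := dot n x x). assert (HX : 0 <= X) by apply dot_nonneg.
  set (F := fun s => (t*s*X+1) / (sqrt(1+t*t*X) * sqrt(1+s*s*X))).
  assert (HF : continuity_pt F t).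
  { unfold F. reg. nra. 
    assert (0 < sqrt (1 + t*t*X)) by (apply sqrt_lt_R0; nra). nra. }
  assert (HFt : F t = 1).
  { unfold F. rewrite sqrt_sqrt by nra. field. nra. }
  assert (HFs : forall s, dot (S n) (Nz n (scale t x)) (Nz n (scale s x)) = F s).
  { intros s. rewrite dot_Nz. unfold sN, F. rewrite !dot_scale_l, !dot_scale_r. fold X.
    f_equal; [ring|]. f_equal; f_equal; f_equal; ring. }
  destruct (HF (eps * eps / 2)) as [d [Hd Hd2]].
  { apply Rlt_gt, Rdiv_lt_0_compat; nra. }
  exists d. split; auto. intros s Hs.
  destruct (Req_dec s t) as [->|Hne]. rewrite edist_self; lra.
  specialize (Hd2 s (conj (conj I (not_eq_sym Hne)) Hs)).
  simpl in Hd2. unfold R_dist in Hd2. rewrite HFt in Hd2.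
  rewrite edist_unit by apply Nz_sphere. rewrite HFs.
  apply Rabs_def2 in Hd2.
  rewrite <- (sqrt_square eps) by lra. apply sqrt_lt_1_alt.
  pose proof (CS_unit (S n) _ _ (Nz_sphere n (scale t x)) (Nz_sphere n (scale s x))) as Hcs.
  rewrite HFs in Hcs. pose proof (Rle_abs (F s)). split; lra.
Qed.

Lemma ray_boundary n g : positive_on_sphere n g -> forall x, ~ Wulff n g x ->
  exists t, 0 <= t < 1 /\ Wulff n g (scale t x) /\
    sph_boundary (S n) (alphaN_inv n (image_Id n (Wulff n g))) (Nz n (scale t x)).
Proof.
  intros Hpos x Hx.
  set (E := fun s => 0 <= s <= 1 /\ Wulff n g (scale s x)).
  destruct (completeness E) as [t [Ht1 Ht2]].
  { exists 1. intros s [Hs _]; lra. }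
  { exists 0. split. lra. intros th Hth. rewrite dot_scale_l. specialize (Hpos th Hth). lra. }
  assert (E0 : E 0).
  { split. lra. intros th Hth. rewrite dot_scale_l. specialize (Hpos th Hth). lra. }
  assert (t0 : 0 <= t) by (apply Ht1; auto).
  assert (t1 : t <= 1) by (apply Ht2; intros s [Hs _]; lra).
  assert (HWt : Wulff n g (scale t x)).
  { intros ph Hph. rewrite dot_scale_l. set (k := dot n x ph).
    pose proof (Hpos ph Hph).
    destruct (Rle_dec k 0). nra.
    assert (t <= g ph / k).
    { apply Ht2. intros l [Hl Hw]. specialize (Hw ph Hph). rewrite dot_scale_l in Hw.
      fold k in Hw. apply Rmult_le_reg_r with k; [lra|].
      replace (g ph / k * k) with (g ph) by (field; lra). lra. }
    apply Rmult_le_compat_r with (r := k) in H0; [|lra].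
    replace (g ph / k * k) with (g ph) in H0 by (field; lra). lra. }
  assert (tlt : t < 1).
  { destruct (Req_dec t 1) as [->|]; [|lra]. exfalso. apply Hx.
    apply (wulff_ext n g (scale 1 x)); auto. intros; unfold scale; ring. }
  exists t. split; [lra|]. split; auto.
  split. apply Nz_sphere. intros eps Heps. split.
  - exists (Nz n (scale t x)). split. apply Nz_sphere. split. apply K_Nz; auto.
    rewrite edist_self; lra.
  - destruct (Nz_cont n x t eps Heps) as [d [Hd Hd2]].
    set (s := t + Rmin d (1 - t) / 2).
    assert (0 < Rmin d (1 - t)) by (apply Rmin_pos; lra).
    pose proof (Rmin_l d (1 - t)); pose proof (Rmin_r d (1 - t)).
    exists (Nz n (scale s x)). split. apply Nz_sphere. split.
    + rewrite K_Nz. intros Hw. assert (E s) by (split; [unfold s; lra | auto]).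
      specialize (Ht1 s H2). unfold s in Ht1; lra.
    + apply Hd2. unfold s. rewrite Rabs_right; lra.
Qed.

Lemma abs_le_split x a : Rabs x <= a -> - a <= x <= a.
Proof. intros H. pose proof (Rle_abs x). pose proof (Rle_abs (- x)). rewrite Rabs_Ropp in H1. lra. Qed.

Lemma K_last_bound n g G1 : 1 <= G1 -> (forall th, sphere n th -> g th <= G1) ->
  forall Q, alphaN_inv n (image_Id n (Wulff n g)) Q -> Q (S n) >= / (1 + G1 * G1).
Proof.
  intros HG1 HG Q HQ. apply K_iff in HQ. destruct HQ as [Hs [Hq HW]].
  set (xq := alphaN n Q) in *.
  assert (Hxx : dot n xq xq <= G1 * G1).
  { destruct (Req_dec (dot n xq xq) 0) as [H0|H0]. rewrite H0; nra.
    pose proof (dot_nonneg n xq).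
    set (nx := nrm n xq).
    assert (Hnx : 0 < nx) by (apply sqrt_lt_R0; lra).
    assert (Hnx2 : nx * nx = dot n xq xq) by (apply sqrt_sqrt; lra).
    set (th := scale (/ nx) xq).
    assert (Hth : sphere n th).
    { unfold sphere, th. rewrite dot_scale_l, dot_scale_r. rewrite <- Hnx2. field. lra. }
    specialize (HW th Hth). specialize (HG th Hth). assert (Hd : dot n xq th = / nx * dot n xq xq) by (unfold th; apply dot_scale_r). rewrite Hd in HW.
    rewrite <- Hnx2 in HW. replace (/ nx * (nx * nx)) with nx in HW by (field; lra).
    rewrite <- Hnx2. nra. }
  assert (HQQ : dot n Q Q = Q (S n) * Q (S n) * dot n xq xq).
  { rewrite (dot_ext_l n Q (scale (Q (S n)) xq)) by (intros; unfold scale, xq; apply P_scaled; lra).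
    rewrite (dot_ext_r n _ Q (scale (Q (S n)) xq)) by (intros; unfold scale, xq; apply P_scaled; lra).
    rewrite dot_scale_l, dot_scale_r. ring. }
  unfold sphere in Hs. rewrite dot_S, HQQ in Hs.
  assert (Q (S n) * Q (S n) <= 1) by (pose proof (dot_nonneg n xq); nra).
  assert (Hq1 : Q (S n) <= 1) by nra.
  pose proof (dot_nonneg n xq).
  assert (Q (S n) * Q (S n) * (1 + G1 * G1) >= 1) by nra.
  apply Rle_ge. apply Rle_trans with (Q (S n) * Q (S n)); [|nra].
  apply Rmult_le_reg_r with (1 + G1 * G1); [nra|].
  rewrite Rinv_l by nra. lra.
Qed.

Lemma boundary_facet n g : continuous_on_sphere n g -> positive_on_sphere n g ->
  self_dual n g -> forall P,
  sph_boundary (S n) (alphaN_inv n (image_Id n (Wulff n g))) P ->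
  exists Q, alphaN_inv n (image_Id n (Wulff n g)) Q /\ sdist (S n) P Q = PI / 2.
Proof.
  intros Hcont Hpos SD P [HsP HbP].
  set (K := alphaN_inv n (image_Id n (Wulff n g))) in *.
  destruct (cont_upper n g Hcont) as [G HG].
  set (G1 := Rmax G 1).
  assert (HG1 : forall th, sphere n th -> g th <= G1)
    by (intros th Hth; eapply Rle_trans; [apply HG; auto| apply Rmax_l]).
  assert (G1ge : 1 <= G1) by apply Rmax_r.
  set (a := / (1 + G1 * G1)).
  assert (Ha : a > 0) by (apply Rlt_gt, Rinv_0_lt_compat; nra).
  pose proof (K_last_bound n g G1 G1ge HG1) as KB.
  assert (HPa : P (S n) >= a).
  { apply Rnot_lt_ge. intros Hlt.
    destruct (proj1 (HbP (a - P (S n)) ltac:(lra))) as [Q [HQs [HQK HQd]]].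
    specialize (KB Q HQK). fold a in KB.
    pose proof (edist_coord (S n) P Q (S n) (le_n _)). apply abs_le_split in H. lra. }
  assert (HPPn : dot n P P <= 1).
  { unfold sphere in HsP. rewrite dot_S in HsP.
    match type of HsP with _ + ?b * ?b = _ => pose proof (Rle_0_sqr b); unfold Rsqr in * end. lra. }
  assert (HPle : forall th, sphere n th -> dot n P th <= P (S n) * g th).
  { intros th Hth. apply Rnot_lt_le. intros Hlt.
    set (eta := dot n P th - P (S n) * g th).
    pose proof (Hpos th Hth).
    destruct (proj1 (HbP (eta / (1 + g th)) ltac:(apply Rlt_gt, Rdiv_lt_0_compat; unfold eta; lra)))
      as [Q [HQs [HQK HQd]]].
    pose proof HQK as HQK'. apply K_iff in HQK'. destruct HQK' as [_ [HQn HQW]].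
    specialize (HQW th Hth). rewrite dot_alphaN in HQW.
    assert (dot n Q th <= Q (S n) * g th).
    { apply Rmult_le_compat_r with (r := Q (S n)) in HQW; [|lra].
      replace (dot n Q th / Q (S n) * Q (S n)) with (dot n Q th) in HQW by (field; lra). lra. }
    assert (Hth1 : dot n th th <= 1) by (unfold sphere in Hth; lra).
    pose proof (dot_lip_unit n th P Q Hth1). rewrite (dot_sym n th P), (dot_sym n th Q) in H1.
    pose proof (edist_S n P Q).
    pose proof (edist_coord (S n) P Q (S n) (le_n _)).
    apply abs_le_split in H1. apply abs_le_split in H3.
    unfold eta in *.
    assert (Hm : (Q (S n) - P (S n)) * g th <= Rabs (P (S n) - Q (S n)) * g th)
      by (apply Rmult_le_compat_r; [lra| rewrite Rabs_minus_sym; apply Rle_abs]).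
    assert (Rabs (P (S n) - Q (S n)) * g th <= edist (S n) P Q * g th)
      by (apply Rmult_le_compat_r; [lra| apply edist_coord; auto]).
    assert (edist (S n) P Q * g th < (dot n P th - P (S n) * g th) / (1 + g th) * g th)
      by (apply Rmult_lt_compat_r; lra).
    assert (edist (S n) P Q < (dot n P th - P (S n) * g th) / (1 + g th)) by lra.
    assert ((dot n P th - P (S n) * g th) / (1 + g th) * g th + (dot n P th - P (S n) * g th) / (1 + g th)
      = dot n P th - P (S n) * g th) by (field; lra).
    assert ((Q (S n) - P (S n)) * g th = Q (S n) * g th - P (S n) * g th) by ring. lra. }
  assert (HPpos : P (S n) > 0) by lra.
  assert (HPn1 : P (S n) <= 1).
  { unfold sphere in HsP. rewrite dot_S in HsP. pose proof (dot_nonneg n P). nra. }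
  assert (Hfacet : exists th0, sphere n th0 /\ dot n P th0 = P (S n) * g th0).
  { apply NNPP. intros Hno.
    set (h := fun th => P (S n) * g th - dot n P th).
    assert (Hhpos : positive_on_sphere n h).
    { intros th Hth. unfold h. specialize (HPle th Hth).
      destruct (Req_dec (dot n P th) (P (S n) * g th)).
      - exfalso; apply Hno; exists th; auto.
      - lra. }
    assert (Hhc : continuous_on_sphere n h).
    { intros th Hth eps Heps.
      destruct (Hcont th Hth (eps / 2) ltac:(lra)) as [d [Hd Hd2]].
      exists (Rmin d (eps / 2)). split. apply Rmin_pos; lra.
      intros th' Hth' Hdist.
      pose proof (Rmin_l d (eps/2)); pose proof (Rmin_r d (eps/2)).
      specialize (Hd2 th' Hth' ltac:(lra)).
      pose proof (dot_lip_unit n P th th' HPPn).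
      unfold h.
      replace (P (S n) * g th - dot n P th - (P (S n) * g th' - dot n P th'))
        with (P (S n) * (g th - g th') - (dot n P th - dot n P th')) by ring.
      eapply Rle_lt_trans. apply Rabs_triang. rewrite Rabs_Ropp, Rabs_mult.
      rewrite (Rabs_right (P (S n))) by lra.
      assert (P (S n) * Rabs (g th - g th') <= Rabs (g th - g th')).
      { pose proof (Rabs_pos (g th - g th')). nra. }
      lra. }
    destruct (cont_lower n h Hhc Hhpos) as [c [Hc Hch]].
    set (eps := Rmin (P (S n)) (c / (G1 + 1))).
    assert (Heps : eps > 0) by (apply Rmin_pos; [lra| apply Rdiv_lt_0_compat; lra]).
    pose proof (Rmin_l (P (S n)) (c / (G1 + 1))); pose proof (Rmin_r (P (S n)) (c / (G1 + 1))).
    destruct (proj2 (HbP eps Heps)) as [Q [HQs [HQK HQd]]].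
    apply HQK. apply K_iff.
    pose proof (edist_coord (S n) P Q (S n) (le_n _)) as Hc1. apply abs_le_split in Hc1.
    split; auto. split. fold eps in H, H0. lra.
    intros th Hth. rewrite dot_alphaN.
    specialize (Hch th Hth). unfold h in Hch.
    pose proof (Hpos th Hth). pose proof (HG1 th Hth).
    assert (Hth1 : dot n th th <= 1) by (unfold sphere in Hth; lra).
    pose proof (dot_lip_unit n th P Q Hth1). rewrite (dot_sym n th P), (dot_sym n th Q) in H3.
    apply abs_le_split in H3. pose proof (edist_S n P Q).
    fold eps in H, H0.
    assert (HQn : Q (S n) > 0) by lra.
    assert (eps * (G1 + 1) <= c).
    { apply Rle_trans with (c / (G1 + 1) * (G1 + 1)). apply Rmult_le_compat_r; lra.
      right; field; lra. }
    assert ((P (S n) - Q (S n)) * g th <= eps * G1).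
    { apply Rle_trans with (edist (S n) P Q * g th). apply Rmult_le_compat_r; lra.
      apply Rle_trans with (eps * g th). apply Rmult_le_compat_r; lra. apply Rmult_le_compat_l; lra. }
    assert (dot n Q th <= Q (S n) * g th).
    { assert ((P (S n) - Q (S n)) * g th = P (S n) * g th - Q (S n) * g th) by ring. lra. }
    apply Rmult_le_reg_r with (Q (S n)); [lra|].
    replace (dot n Q th / Q (S n) * Q (S n)) with (dot n Q th) by (field; lra). lra. }
  destruct Hfacet as [th0 [Hth0 Heq]].
  pose proof (Hpos th0 Hth0) as Hg0.
  set (y := scale (- / g th0) th0).
  assert (Hy : Wulff n g y) by (apply SD; apply facet_DW; auto).
  exists (Nz n y). split. apply K_Nz; auto.
  unfold sdist. rewrite <- acos_0. f_equal.
  rewrite dot_S, (dot_sym n P), dot_Nz_l, (dot_sym n y), Nz_last.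
  unfold y. rewrite dot_scale_r. rewrite Heq. pose proof (sN_pos n y).
  fold y. field. split; lra.
Qed.

Definition e0 : vec := fun i => match i with O => 1 | _ => 0 end.

Lemma e0_sphere n : sphere n e0.
Proof.
  unfold sphere. induction n. unfold dot; simpl; lra.
  rewrite dot_S, IHn. simpl. lra.
Qed.

Theorem mainTheorem7 (n : nat) (gamma : vec -> R)
  (Hcont : continuous_on_sphere n gamma)
  (Hpos : positive_on_sphere n gamma) :
  self_dual n gamma <->
  constant_diameter (S n)
    (alphaN_inv n (image_Id n (Wulff n gamma))) (PI / 2).
Proof.
  destruct (cont_lower n gamma Hcont Hpos) as [c [Hc Hlow]].
  split.
  - intros SD.
    assert (Hb : forall x y, Wulff n gamma x -> Wulff n gamma y -> dot n x y >= -1).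
    { intros x y Hx Hy. apply (DW_bound n gamma c Hc Hlow); auto. apply SD; auto. }
    split; [split|].
    + set (x := scale (gamma e0 + 1) e0).
      assert (Hx : ~ Wulff n gamma x).
      { intros H. specialize (H e0 (e0_sphere n)). unfold x in H.
        rewrite dot_scale_l in H. rewrite (e0_sphere n) in H. lra. }
      destruct (ray_boundary n gamma Hpos x Hx) as [t [Ht [HWt Hbd]]].
      destruct (boundary_facet n gamma Hcont Hpos SD _ Hbd) as [Q [HQ Hd]].
      exists (Nz n (scale t x)), Q. split; [apply K_Nz; auto|]. split; auto.
    + intros P Q HP HQ. apply K_iff in HP, HQ.
      destruct HP as [_ [HP1 HP2]]; destruct HQ as [_ [HQ1 HQ2]].
      unfold sdist. apply acos_le_half.
      rewrite dot_K by lra. specialize (Hb _ _ HP2 HQ2).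
      apply Rmult_le_pos; [apply Rmult_le_pos|]; lra.
    + intros P HP. apply (boundary_facet n gamma Hcont Hpos SD P HP).
  - intros [[Hex Hle] Hbd].
    assert (Hb : forall x y, Wulff n gamma x -> Wulff n gamma y -> dot n x y >= -1).
    { intros x y Hx Hy.
      pose proof (Hle (Nz n x) (Nz n y) (proj2 (K_Nz n gamma x) Hx) (proj2 (K_Nz n gamma y) Hy)) as H.
      apply acos_le_half_inv in H. rewrite dot_Nz in H.
      pose proof (sN_pos n x); pose proof (sN_pos n y).
      assert (0 <= dot n x y + 1).
      { apply Rmult_le_reg_r with (/ (sN n x * sN n y)).
        apply Rinv_0_lt_compat, Rmult_lt_0_compat; lra. rewrite Rmult_0_l. exact H. }
      lra. }
    intros x. split.
    + apply W_in_DW; auto.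
    + intros Hx. apply NNPP. intros HnW.
      destruct (ray_boundary n gamma Hpos x HnW) as [t [Ht [HWt Hbdy]]].
      destruct (Hbd _ Hbdy) as [Q [HQ Hd]].
      unfold sdist in Hd. apply acos_half_inv in Hd.
      apply K_iff in HQ. destruct HQ as [_ [HQ1 HQ2]].
      pose proof (Nz_last_pos n (scale t x)).
      rewrite dot_K in Hd by lra.
      assert (dot n (alphaN n (Nz n (scale t x))) (alphaN n Q) = -1).
      { assert (Nz n (scale t x) (S n) * Q (S n) <> 0) by (apply Rmult_integral_contrapositive; split; lra).
        apply Rmult_integral in Hd. destruct Hd; [contradiction| lra]. }
      rewrite (dot_ext_l n _ (scale t x)) in H0 by (intros; apply alphaN_Nz; auto).
      rewrite dot_scale_l in H0.
      pose proof (DW_bound n gamma c Hc Hlow x (alphaN n Q) Hx HQ2). nra.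
Qed.
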